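(* Let $m>5$ and let $\lambda=(\boldsymbol\lambda_1,\ldots,\boldsymbol\lambda_m)$ be a real characteristic matrix on $C^3(m)^*$. Then $\lambda$ is decomposable, i.e. there exists $k$ with $2<k<m-1$ such that $\det(\boldsymbol\lambda_1,\boldsymbol\lambda_k,\boldsymbol\lambda_m)=1$ in $\mathbb{Z}/2$.
   Context: $C^3(m)^*$ is the dual of the cyclic $3$-polytope with $m$ vertices, a simple $3$-polytope with facets $F_1,\ldots,F_m$ labeled so that three facets $F_{i_1},F_{i_2},F_{i_3}$ meet at a vertex iff $\{i_1,i_2,i_3\}$ is $\{1,i,i+1\}$ for some $2\le i\le m-1$ or $\{i,i+1,m\}$ for some $1\le i\le m-2$. A real characteristic matrix on it is a $3\times m$ matrix over $\mathbb{Z}/2$ such that $\det(\boldsymbol\lambda_{i_1},\boldsymbol\lambda_{i_2},\boldsymbol\lambda_{i_3})=1$ whenever $F_{i_1},F_{i_2},F_{i_3}$ meet at a vertex. *)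

(* Defs.v *)
From mathcomp Require Import all_boot all_algebra.
Set Implicit Arguments. Unset Strict Implicit. Unset Printing Implicit Defensive.
Import GRing.Theory.
Local Open Scope ring_scope.

(* Facets of C^3(m)^* are F_1..F_m (1-based); facet F_i corresponds to column
   index i-1 (an element of 'I_m) of a 3 x m matrix over Z/2 = 'F_2. *)

(* lambda_i as a column vector, for 1 <= i <= m (0 outside this range; never
   used there). *)
Definition lamv (m : nat) (lam : 'M['F_2]_(3, m)) (i : nat) : 'cV['F_2]_3 :=
  \col_r (if @insub _ (fun j => j < m)%N _ i.-1 is Some j then lam r j else 0).

Definition det3 (m : nat) (lam : 'M['F_2]_(3, m)) (i1 i2 i3 : nat) : 'F_2 :=
  \det (\matrix_(r < 3, c < 3)
          (lamv lam (nth 0%N [:: i1; i2; i3] c)) r ord0).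

Definition same_set3 (i1 i2 i3 a b c : nat) : bool :=
  perm_eq [:: i1; i2; i3] [:: a; b; c].

Definition vertex_triple (m i1 i2 i3 : nat) : Prop :=
  (exists i, (2 <= i <= m - 1)%N /\ same_set3 i1 i2 i3 1 i i.+1)
  \/ (exists i, (1 <= i <= m - 2)%N /\ same_set3 i1 i2 i3 i i.+1 m).

Definition real_char_matrix (m : nat) (lam : 'M['F_2]_(3, m)) : Prop :=
  forall i1 i2 i3 : nat, vertex_triple m i1 i2 i3 -> det3 lam i1 i2 i3 = 1.

(* Main.v *)
Require Import Defs.
From mathcomp Require Import all_boot all_algebra ring zify.
Local Open Scope ring_scope.
Import GRing.Theory.

Lemma det33 (R : comRingType) (A : 'M[R]_3) : \det A =
  A 0 0 * (A 1 1 * A 2 2 - A 1 2 * A 2 1)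
  - A 0 1 * (A 1 0 * A 2 2 - A 1 2 * A 2 0)
  + A 0 2 * (A 1 0 * A 2 1 - A 1 1 * A 2 0).
Proof.
have -> : A = \matrix_(i,j) A (inord i) (inord j).
  by apply/matrixP => i j; rewrite mxE !inord_val.
rewrite (expand_det_row _ 0) !big_ord_recr big_ord0 /= /cofactor.
rewrite !(expand_det_row _ 0) !big_ord_recr !big_ord0 /= /cofactor.
rewrite !det_mx11 !mxE /= !expr0 !expr1 ?expr2.
rewrite /bump /= ?modn_small // !(addn0, add0n) (_ : (1+1 = 2)%N) //.
ring.
Qed.

Definition f (a0 a1 a2 b0 b1 b2 c0 c1 c2 : 'F_2) : 'F_2 :=
  a0 * (b1 * c2 - c1 * b2) - b0 * (a1 * c2 - c1 * a2) + c0 * (a1 * b2 - b1 * a2).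

Definition gB (a0 a1 a2 b0 b1 b2 c0 c1 c2 : bool) : bool :=
  a0 && (b1 && c2 (+) c1 && b2) (+) b0 && (a1 && c2 (+) c1 && a2)
  (+) c0 && (a1 && b2 (+) b1 && a2).

Definition b2F (b : bool) : 'F_2 := if b then 1 else 0.

Lemma b2FD a b : b2F (a (+) b) = b2F a + b2F b.
Proof. by case: a; case: b; apply/val_inj. Qed.
Lemma b2FM a b : b2F (a && b) = b2F a * b2F b.
Proof. by case: a; case: b; apply/val_inj. Qed.
Lemma oppF2 (x : 'F_2) : - x = x.
Proof. by case: x => [[|[|n]] Hx]; [apply/val_inj..|]. Qed.
Lemma b2F_eq (x : 'F_2) : x = b2F (x == 1).
Proof. by case: x => [[|[|n]] Hx]; [apply/val_inj..|]. Qed.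
Lemma b2F1 b : (b2F b == 1) = b.
Proof. by case: b. Qed.

Lemma fgB a0 a1 a2 b0 b1 b2 c0 c1 c2 :
  f (b2F a0) (b2F a1) (b2F a2) (b2F b0) (b2F b1) (b2F b2) (b2F c0) (b2F c1) (b2F c2)
  = b2F (gB a0 a1 a2 b0 b1 b2 c0 c1 c2).
Proof. by rewrite /f /gB !(b2FD, b2FM) !oppF2. Qed.

Definition allb (p : bool -> bool) := p true && p false.
Lemma allbP p : allb p -> forall b, p b.
Proof. by case/andP => ? ? []. Qed.

Lemma bigB : allb (fun a0 => allb (fun a1 => allb (fun a2 =>
  allb (fun c0 => allb (fun c1 => allb (fun c2 =>
  allb (fun d0 => allb (fun d1 => allb (fun d2 =>
  allb (fun e0 => allb (fun e1 => allb (fun e2 =>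
  allb (fun x0 => allb (fun x1 => allb (fun x2 =>
  gB a0 a1 a2 c0 c1 c2 d0 d1 d2 ==> gB c0 c1 c2 d0 d1 d2 e0 e1 e2 ==>
  gB a0 a1 a2 x0 x1 x2 e0 e1 e2 ==>
  gB a0 a1 a2 c0 c1 c2 e0 e1 e2 || gB a0 a1 a2 d0 d1 d2 e0 e1 e2
  ))))))))))))))).
Proof. vm_compute. reflexivity. Qed.

Lemma finF (a0 a1 a2 c0 c1 c2 d0 d1 d2 e0 e1 e2 x0 x1 x2 : 'F_2) :
  f a0 a1 a2 c0 c1 c2 d0 d1 d2 = 1 -> f c0 c1 c2 d0 d1 d2 e0 e1 e2 = 1 ->
  f a0 a1 a2 x0 x1 x2 e0 e1 e2 = 1 ->
  f a0 a1 a2 c0 c1 c2 e0 e1 e2 = 1 \/ f a0 a1 a2 d0 d1 d2 e0 e1 e2 = 1.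
Proof.
rewrite [a0]b2F_eq [a1]b2F_eq [a2]b2F_eq [c0]b2F_eq [c1]b2F_eq [c2]b2F_eq.
rewrite [d0]b2F_eq [d1]b2F_eq [d2]b2F_eq [e0]b2F_eq [e1]b2F_eq [e2]b2F_eq.
rewrite [x0]b2F_eq [x1]b2F_eq [x2]b2F_eq !fgB.
move=> /eqP; rewrite b2F1 => H1 /eqP; rewrite b2F1 => H2 /eqP; rewrite b2F1 => H3.
have := bigB.
move/allbP/(_ (a0 == 1))/allbP/(_ (a1 == 1))/allbP/(_ (a2 == 1))/allbP/(_ (c0 == 1))/allbP/(_ (c1 == 1))/allbP/(_ (c2 == 1))/allbP/(_ (d0 == 1))/allbP/(_ (d1 == 1))/allbP/(_ (d2 == 1))/allbP/(_ (e0 == 1))/allbP/(_ (e1 == 1))/allbP/(_ (e2 == 1))/allbP/(_ (x0 == 1))/allbP/(_ (x1 == 1))/allbP/(_ (x2 == 1)).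
rewrite H1 H2 H3 /= => /orP [] ->; by [left | right].
Qed.

Lemma det3E m (lam : 'M['F_2]_(3, m)) i j k :
  det3 lam i j k = f (lamv lam i 0 ord0) (lamv lam i 1 ord0) (lamv lam i 2 ord0)
    (lamv lam j 0 ord0) (lamv lam j 1 ord0) (lamv lam j 2 ord0)
    (lamv lam k 0 ord0) (lamv lam k 1 ord0) (lamv lam k 2 ord0).
Proof. by rewrite /det3 det33 !mxE /=. Qed.

Theorem lemma5p13 (m : nat) (lam : 'M['F_2]_(3, m)) :
  (5 < m)%N -> real_char_matrix lam ->
  exists k : nat, (2 < k < m - 1)%N /\ det3 lam 1 k m = 1.
Proof.
move=> hm H.
have H1 : det3 lam 1 3 4 = 1.
  by apply: H; left; exists 3%N; split; [apply/andP; split; lia | exact: perm_refl].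
have H2 : det3 lam 3 4 m = 1.
  by apply: H; right; exists 3%N; split; [apply/andP; split; lia | exact: perm_refl].
have H3 : det3 lam 1 (m - 1) m = 1.
  apply: H; left; exists (m - 1)%N; split; first by apply/andP; split; lia.
  have -> : (m - 1).+1 = m by lia.
  exact: perm_refl.
rewrite !det3E in H1 H2 H3.
case: (finF _ _ _ _ _ _ _ _ _ _ _ _ _ _ _ H1 H2 H3) => [h|h].
  by exists 3%N; split; [apply/andP; split; lia | rewrite det3E].
by exists 4%N; split; [apply/andP; split; lia | rewrite det3E].
Qed.
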